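(* Let $u$ be a unit vector of the form $\frac{1}{\sqrt2^{\,k}\sqrt5^{\,\ell}}\begin{bmatrix}\alpha\\\beta\end{bmatrix}$ with $k,\ell\in\mathbb N$, $0\le k\le 2$, $\alpha,\beta\in\mathbb Z[i]$, whose least denominator exponent is $(k,\ell)$. Then there exists a Clifford circuit $W$ such that $Wu$ has least denominator exponent $(0,\ell)$.
   Context: A Clifford circuit is a product of the gates $\omega I$ (with $\omega=e^{i\pi/4}$), $H=\frac{1}{\sqrt2}\begin{bmatrix}1&1\\1&-1\end{bmatrix}$, $S=\begin{bmatrix}1&0\\0&i\end{bmatrix}$ and their inverses. For a vector $v\in\mathbb C^2$ that can be written as $\frac{1}{\sqrt2^{\,k}\sqrt5^{\,\ell}}\begin{bmatrix}\alpha\\\beta\end{bmatrix}$ with $k,\ell\in\mathbb N$, $0\le k\le2$, $\alpha,\beta\in\mathbb Z[i]$, the least $\sqrt2$-denominator exponent (resp. least $\sqrt5$-denominator exponent) is the least $k$ (resp. least $\ell$) for which such a representation exists, and the least denominator exponent of $v$ is the pair (least $\sqrt2$-exponent, least $\sqrt5$-exponent). *)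

(* Defs.v *)
(* complex numbers modelled by algC (algebraic complex numbers),
   which contain i, sqrt 2, sqrt 5 and all entries involved. *)
From HB Require Import structures.
From mathcomp Require Import all_boot all_order all_algebra all_field.
Set Implicit Arguments. Unset Strict Implicit. Unset Printing Implicit Defensive.
Import Order.TTheory GRing.Theory Num.Theory.
Local Open Scope ring_scope.

Definition gaussian (z : algC) : Prop :=
  exists a b : int, z = a%:~R + b%:~R * 'i.

Definition sqrt2 : algC := sqrtC 2.
Definition sqrt5 : algC := sqrtC 5.
Definition omega : algC := (1 + 'i) / sqrt2.

Definition vec2 (a b : algC) : 'cV[algC]_2 :=
  \col_(i < 2) (if (i : nat) == 0%N then a else b).
Definition mx2 (a b c d : algC) : 'M[algC]_2 :=
  \matrix_(i < 2, j < 2)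
    (if (i : nat) == 0%N then (if (j : nat) == 0%N then a else b)
     else (if (j : nat) == 0%N then c else d)).

Definition Hgate : 'M[algC]_2 := sqrt2^-1 *: mx2 1 1 1 (-1).
Definition Sgate : 'M[algC]_2 := mx2 1 0 0 'i.
Definition Sinv  : 'M[algC]_2 := mx2 1 0 0 (- 'i).
Definition Wgate : 'M[algC]_2 := omega%:M.
Definition Winv  : 'M[algC]_2 := (omega^-1)%:M.

(* generators of Clifford circuits: omega I, H, S and their inverses (H^-1 = H) *)
Definition clifford_gen (G : 'M[algC]_2) : Prop :=
  G = Wgate \/ G = Winv \/ G = Hgate \/ G = Sgate \/ G = Sinv.

Inductive clifford : 'M[algC]_2 -> Prop :=
| clifford_id : clifford 1%:M
| clifford_mul G W : clifford_gen G -> clifford W -> clifford (G *m W).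

Definition has_rep (v : 'cV[algC]_2) (k l : nat) : Prop :=
  (k <= 2)%N /\ exists alpha beta : algC, gaussian alpha /\ gaussian beta /\
    v = (sqrt2 ^+ k * sqrt5 ^+ l)^-1 *: vec2 alpha beta.

Definition lde (v : 'cV[algC]_2) (k l : nat) : Prop :=
  ((exists l', has_rep v k l') /\ (forall k' l', has_rep v k' l' -> (k <= k')%N)) /\
  ((exists k', has_rep v k' l) /\ (forall k' l', has_rep v k' l' -> (l <= l')%N)).

Definition unit_vec (v : 'cV[algC]_2) : Prop :=
  \sum_(i < 2) `|v i 0| ^+ 2 = 1.

(* Main.v *)
Require Import Defs.
From mathcomp Require Import all_boot all_order all_algebra all_field.
From mathcomp Require Import ring lra zify.
Set Implicit Arguments. Unset Strict Implicit. Unset Printing Implicit Defensive.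
Import Order.TTheory GRing.Theory Num.Theory.
Local Open Scope ring_scope.

Definition gi (a b : int) : algC := a%:~R + b%:~R * 'i.
Definition cc (j l : nat) : algC := (sqrt2 ^+ j * sqrt5 ^+ l)^-1.
Definition grep (v : 'cV[algC]_2) (k l : nat) : Prop :=
  exists alpha beta : algC, gaussian alpha /\ gaussian beta /\
    v = (sqrt2 ^+ k * sqrt5 ^+ l)^-1 *: vec2 alpha beta.

Lemma sqrt2K : sqrt2 * sqrt2 = 2.
Proof. by rewrite -expr2 /sqrt2 sqrtCK. Qed.
Lemma sqrt2_neq0 : sqrt2 != 0.
Proof. by rewrite /sqrt2 sqrtC_eq0 pnatr_eq0. Qed.
Lemma sqrt5_neq0 : sqrt5 != 0.
Proof. by rewrite /sqrt5 sqrtC_eq0 pnatr_eq0. Qed.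
Lemma sqrt2_ge0 : 0 <= sqrt2.
Proof. by rewrite /sqrt2 sqrtC_ge0 ler0n. Qed.
Lemma sqrt5_ge0 : 0 <= sqrt5.
Proof. by rewrite /sqrt5 sqrtC_ge0 ler0n. Qed.

Lemma iK : 'i * 'i = -1 :> algC.
Proof. by rewrite -expr2 sqrCi. Qed.

Lemma vec2E (v : 'cV[algC]_2) : v = vec2 (v 0 0) (v 1 0).
Proof.
apply/matrixP => i j; rewrite !mxE.
case: i => [[|[|i]] Hi] //=; rewrite (ord1 j); congr (v _ _); exact: val_inj.
Qed.

Lemma vec2_eq a b c d : a = c -> b = d -> vec2 a b = vec2 c d.
Proof. by move=> -> ->. Qed.

Lemma scale_vec2 c a b : c *: vec2 a b = vec2 (c * a) (c * b).
Proof. by apply/matrixP => i j; rewrite !mxE; case: ifP. Qed.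

Lemma mx2_vec2 p q r s x y :
  mx2 p q r s *m vec2 x y = vec2 (p * x + q * y) (r * x + s * y).
Proof.
apply/matrixP => i j; rewrite !mxE big_ord_recl big_ord1 !mxE /=.
by case: ifP.
Qed.

Lemma mx2_mul p q r s p' q' r' s' :
  mx2 p q r s *m mx2 p' q' r' s' =
  mx2 (p * p' + q * r') (p * q' + q * s') (r * p' + s * r') (r * q' + s * s').
Proof.
apply/matrixP => i j; rewrite !mxE big_ord_recl big_ord1 !mxE /=.
by case: ifP; case: ifP.
Qed.

Lemma mx2_1 : 1%:M = mx2 1 0 0 1 :> 'M[algC]_2.
Proof.
apply/matrixP => i j; rewrite !mxE.
by case: i => [[|[|i]] Hi] //=; case: j => [[|[|j]] Hj].
Qed.

Lemma gaussian_gi a b : gaussian (gi a b).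
Proof. by exists a, b. Qed.

Lemma norm_gi a b : `|gi a b| ^+ 2 = (a * a + b * b)%:~R.
Proof.
by rewrite /gi mulrC normC2_rect ?realz // intrD !intrM !expr2.
Qed.

Lemma cc_ge0 j l : 0 <= cc j l.
Proof. by rewrite /cc invr_ge0 mulr_ge0 // exprn_ge0 // ?sqrt2_ge0 ?sqrt5_ge0. Qed.

Lemma cc2 j l : cc j l ^+ 2 = ((2 ^ j * 5 ^ l)%N%:R)^-1.
Proof.
rewrite /cc exprVn exprMn -!exprM mulnC [(l * 2)%N]mulnC !exprM.
by rewrite /sqrt2 /sqrt5 !sqrtCK natrM !natrX.
Qed.

Lemma unit_norm j l a b c d :
  unit_vec (cc j l *: vec2 (gi a b) (gi c d)) ->
  a * a + b * b + c * c + d * d = (2 ^ j * 5 ^ l)%N%:Z.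
Proof.
rewrite /unit_vec big_ord_recl big_ord1 scale_vec2 !mxE /=.
rewrite !normrM !exprMn ger0_norm ?cc_ge0 // cc2 !norm_gi -mulrDr.
move=> H; apply: (@intr_inj algC).
have H2 : ((2 ^ j * 5 ^ l)%N%:R : algC) != 0 by rewrite pnatr_eq0 muln_eq0 !expn_eq0.
have -> : (a * a + b * b + c * c + d * d)%:~R = (a * a + b * b)%:~R + (c * c + d * d)%:~R :> algC.
  by rewrite -intrD; congr (_%:~R); lia.
apply: (mulfI (invr_neq0 H2)); by rewrite H mulVf.
Qed.

Lemma sq_par (a : int) :
  (exists x, a = 2 * x /\ exists y, a * a = 4 * y) \/
  (exists x, a = 2 * x + 1 /\ exists y, a * a = 8 * y + 1).
Proof.
have E := divz_eq a 4.
have H1 : 0 <= (a %% 4)%Z by apply: modz_ge0.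
have H2 : (a %% 4)%Z < 4 by apply: ltz_pmod.
set q := (a %/ 4)%Z in E; set r := (a %% 4)%Z in E H1 H2.
have : r = 0 \/ r = 1 \/ r = 2 \/ r = 3 by lia.
case=> [Hr|[Hr|[Hr|Hr]]]; rewrite Hr in E.
- left; exists (2 * q); split; [lia|exists (4 * q * q); nia].
- right; exists (2 * q); split; [lia|exists (2 * q * q + q); nia].
- left; exists (2 * q + 1); split; [lia|exists (4 * q * q + 4 * q + 1); nia].
- right; exists (2 * q + 1); split; [lia|exists (2 * q * q + 3 * q + 1); nia].
Qed.

Ltac dpar a := let x := fresh "x" in let E := fresh "E" in let y := fresh "y" in
  let S := fresh "S" in
  case: (sq_par a) => [[x [E [y S]]]|[x [E [y S]]]]; rewrite S.

Lemma ev2 (x : int) : (x %% 2)%Z = 0 -> x = 2 * (x %/ 2)%Z.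
Proof. lia. Qed.

Lemma N8 (a b c d m : int) : a * a + b * b + c * c + d * d = 8 * m ->
  [/\ (a %% 2)%Z = 0, (b %% 2)%Z = 0, (c %% 2)%Z = 0 & (d %% 2)%Z = 0].
Proof.
dpar a; dpar b; dpar c; dpar d => H; split; lia.
Qed.

Lemma N4 (a b c d t : int) : a * a + b * b + c * c + d * d = 4 * (2 * t + 1) ->
  [/\ (a %% 2)%Z = 0, (b %% 2)%Z = 0, (c %% 2)%Z = 0 & (d %% 2)%Z = 0] \/
  [/\ (a %% 2)%Z = 1, (b %% 2)%Z = 1, (c %% 2)%Z = 1 & (d %% 2)%Z = 1].
Proof.
dpar a; dpar b; dpar c; dpar d => H; first [lia | left; split; lia | right; split; lia].
Qed.

Lemma N2 (a b c d t : int) : a * a + b * b + c * c + d * d = 2 * (2 * t + 1) ->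
  ((a + b) %% 2 = 0 /\ (c + d) %% 2 = 0)%Z \/
  ((a + c) %% 2 = 0 /\ (b + d) %% 2 = 0)%Z \/
  ((a + d) %% 2 = 0 /\ (b + c) %% 2 = 0)%Z.
Proof.
dpar a; dpar b; dpar c; dpar d => H; lia.
Qed.

Lemma gaussian_mul x y : gaussian x -> gaussian y -> gaussian (x * y).
Proof.
move=> [a [b ->]] [c [d ->]]; exists (a * c - b * d), (a * d + b * c).
rewrite !(intrD, intrN, intrM); ring: iK.
Qed.
Lemma gaussian_add x y : gaussian x -> gaussian y -> gaussian (x + y).
Proof.
move=> [a [b ->]] [c [d ->]]; exists (a + c), (b + d).
rewrite !intrD; ring.
Qed.
Lemma gaussian_opp x : gaussian x -> gaussian (- x).
Proof.
move=> [a [b ->]]; exists (- a), (- b); rewrite !intrN; ring.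
Qed.
Lemma gaussian_sub x y : gaussian x -> gaussian y -> gaussian (x - y).
Proof. by move=> Hx Hy; apply: gaussian_add => //; apply: gaussian_opp. Qed.
Lemma gaussian_i : gaussian 'i.
Proof. exists 0, 1; rewrite mul1r add0r. done. Qed.
Lemma gaussian_1pi : gaussian (1 + 'i).
Proof. exists 1, 1; by rewrite mul1r. Qed.
Lemma gaussian_1mi : gaussian (1 - 'i).
Proof. exists 1, (-1); by rewrite mulN1r. Qed.

Lemma omega_inv : omega^-1 = (1 - 'i) / sqrt2.
Proof.
have H : omega * ((1 - 'i) / sqrt2) = 1.
  rewrite /omega; field: sqrt2K iK; exact: sqrt2_neq0.
have Hn : omega != 0 by apply/eqP => H0; move: H; rewrite H0 mul0r => /eqP; rewrite eq_sym oner_eq0.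
by apply: (mulfI Hn); rewrite mulfV // H.
Qed.

Lemma omega_neq0 : omega != 0.
Proof.
have H : omega * ((1 - 'i) / sqrt2) = 1.
  rewrite /omega; field: sqrt2K iK; exact: sqrt2_neq0.
by apply/eqP => H0; move: H; rewrite H0 mul0r => /eqP; rewrite eq_sym oner_eq0.
Qed.

Lemma G_H x y : Hgate *m vec2 x y = vec2 (sqrt2^-1 * (x + y)) (sqrt2^-1 * (x - y)).
Proof. rewrite /Hgate -scalemxAl mx2_vec2 scale_vec2; apply: vec2_eq; ring. Qed.
Lemma G_S x y : Sgate *m vec2 x y = vec2 x ('i * y).
Proof. rewrite /Sgate mx2_vec2; apply: vec2_eq; ring. Qed.
Lemma G_Si x y : Sinv *m vec2 x y = vec2 x (- 'i * y).
Proof. rewrite /Sinv mx2_vec2; apply: vec2_eq; ring. Qed.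

Lemma s2n j : sqrt2 ^+ j != 0. Proof. exact: expf_neq0 sqrt2_neq0. Qed.
Lemma s5n l : sqrt5 ^+ l != 0. Proof. exact: expf_neq0 sqrt5_neq0. Qed.

Lemma gen_grep G v j l : clifford_gen G -> grep v j l -> exists j', grep (G *m v) j' l.
Proof.
move=> HG [al [be [Ha [Hb ->]]]].
have Hs2 := sqrt2_neq0; have Hj := s2n j; have Hl := s5n l.
case: HG => [->|[->|[->|[->|->]]]].
- exists j.+1, ((1 + 'i) * al), ((1 + 'i) * be).
  split; [exact: gaussian_mul gaussian_1pi Ha|split; [exact: gaussian_mul gaussian_1pi Hb|]].
  rewrite /Wgate mul_scalar_mx !scale_vec2 /omega exprS; apply: vec2_eq; field.
  1,2: repeat (apply: andb_true_intro; split); first [exact: Hl | exact: Hj | exact: Hs2].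
- exists j.+1, ((1 - 'i) * al), ((1 - 'i) * be).
  split; [exact: gaussian_mul gaussian_1mi Ha|split; [exact: gaussian_mul gaussian_1mi Hb|]].
  rewrite /Winv mul_scalar_mx !scale_vec2 omega_inv exprS; apply: vec2_eq; field.
  1,2: repeat (apply: andb_true_intro; split); first [exact: Hl | exact: Hj | exact: Hs2].
- exists j.+1, (al + be), (al - be).
  split; [exact: gaussian_add|split; [exact: gaussian_sub|]].
  rewrite -scalemxAr G_H !scale_vec2 exprS; apply: vec2_eq; field.
  1,2: repeat (apply: andb_true_intro; split); first [exact: Hl | exact: Hj | exact: Hs2].
- exists j, al, ('i * be).
  split; [done|split; [exact: gaussian_mul gaussian_i Hb|]].
  by rewrite -scalemxAr G_S.
- exists j, al, (- 'i * be).
  split; [done|split; [apply: gaussian_mul Hb; exact: gaussian_opp gaussian_i|]].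
  by rewrite -scalemxAr G_Si.
Qed.

Lemma cliff_grep W v j l : clifford W -> grep v j l -> exists j', grep (W *m v) j' l.
Proof.
move=> HW; elim: HW v j => [|G W0 HG HW IH] v j Hv.
  by exists j; rewrite mul1mx.
have [j' Hj'] := IH v j Hv.
have [j'' Hj''] := gen_grep HG Hj'.
by exists j''; rewrite -mulmxA.
Qed.

Lemma cliff_comp A B : clifford A -> clifford B -> clifford (A *m B).
Proof.
elim=> [|G W HG HW IH] HB; first by rewrite mul1mx.
by rewrite -mulmxA; apply: clifford_mul => //; apply: IH.
Qed.

Lemma cliff_gen G : clifford_gen G -> clifford G.
Proof. by move=> HG; rewrite -[G]mulmx1; apply: clifford_mul => //; exact: clifford_id. Qed.

Lemma scale_mx2 c p q r s : c *: mx2 p q r s = mx2 (c * p) (c * q) (c * r) (c * s).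
Proof. by apply/matrixP => i j; rewrite !mxE; case: ifP; case: ifP. Qed.

Lemma gen_inv G : clifford_gen G -> exists G', clifford_gen G' /\ G' *m G = 1%:M.
Proof.
case=> [->|[->|[->|[->|->]]]].
- exists Winv; split; first by right; left.
  by rewrite /Winv /Wgate -scalar_mxM mulVf // omega_neq0.
- exists Wgate; split; first by left.
  by rewrite /Winv /Wgate -scalar_mxM mulfV // omega_neq0.
- exists Hgate; split; first by right; right; left.
  rewrite /Hgate -scalemxAl -scalemxAr scalerA mx2_mul scale_mx2 mx2_1.
  have Hs := sqrt2_neq0.
  congr mx2; field: sqrt2K; exact: Hs.
- exists Sinv; split; first by right; right; right; right.
  rewrite /Sinv /Sgate mx2_mul mx2_1; congr mx2; ring: iK.
- exists Sgate; split; first by right; right; right; left.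
  rewrite /Sinv /Sgate mx2_mul mx2_1; congr mx2; ring: iK.
Qed.

Lemma cliff_inv W : clifford W -> exists V, clifford V /\ V *m W = 1%:M.
Proof.
elim=> [|G W0 HG HW [V0 [HV0 E0]]].
  by exists 1%:M; split; [exact: clifford_id|rewrite mul1mx].
have [G' [HG' E']] := gen_inv HG.
exists (V0 *m G'); split; first by apply: cliff_comp => //; exact: cliff_gen.
by rewrite mulmxA -(mulmxA V0) E' mulmx1.
Qed.

Ltac nzt := repeat (apply: andb_true_intro; split); assumption.

Lemma gaussianE x : gaussian x -> exists a b, x = gi a b.
Proof. by []. Qed.

Lemma reduceA u : unit_vec u -> forall j l, grep u j l ->
  exists k, (k <= 2)%N /\ grep u k l.
Proof.
move=> Hu j; elim: j {-2}j (leqnn j) => [|n IH] j Hj l Hr.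
  by exists j; split => //; apply: leq_trans Hj _.
case: (leqP j 2) => Hj2; first by exists j.
have [j' Ej] : exists j', j = j'.+3 by exists (j - 3)%N; lia.
subst j.
case: Hr => [al [be [Ha [Hb Hv]]]].
case: Ha => [a [b Ea]]; case: Hb => [c [d Eb]]; subst al be.
have := @unit_norm j'.+3 l a b c d.
rewrite -Hv => /(_ Hu) Hn.
have Hn' : a * a + b * b + c * c + d * d = 8 * (2 ^ j' * 5 ^ l)%N%:Z.
  rewrite Hn; rewrite !expnS; lia.
have [ea eb ec ed] := N8 Hn'.
apply: (IH j'.+1 _ l); first by lia.
exists (gi (a %/ 2)%Z (b %/ 2)%Z), (gi (c %/ 2)%Z (d %/ 2)%Z).
split; first exact: gaussian_gi. split; first exact: gaussian_gi.
have := s2n j'; have := s5n l; have := sqrt2_neq0 => ? ? ?.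
rewrite Hv !scale_vec2; apply: vec2_eq; rewrite /gi.
  rewrite {1}(ev2 ea) {1}(ev2 eb) !intrM !exprS; field: sqrt2K; nzt.
rewrite {1}(ev2 ec) {1}(ev2 ed) !intrM !exprS; field: sqrt2K; nzt.
Qed.


Lemma odd5 l : exists t : int, (5 ^ l)%N%:Z = 2 * t + 1.
Proof.
exists ((5 ^ l)./2)%N%:Z.
have H := odd_double_half (5 ^ l).
have Ho : odd (5 ^ l) by rewrite oddX orbT.
rewrite Ho -muln2 in H. lia.
Qed.

Lemma K1 l a b c d : a * a + b * b + c * c + d * d = (2 * 5 ^ l)%N%:Z ->
  exists W, clifford W /\
    grep (W *m ((sqrt2 ^+ 1 * sqrt5 ^+ l)^-1 *: vec2 (gi a b) (gi c d))) 0 l.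
Proof.
move=> Hn; have [t Ht] := odd5 l.
have Hn' : a * a + b * b + c * c + d * d = 2 * (2 * t + 1) by lia.
have := s5n l; have := sqrt2_neq0 => ? ?.
case: (N2 Hn') => [[h1 h2]|[[h1 h2]|[h1 h2]]].
- have [p Hp] : exists p, b = 2 * p - a by exists ((a + b) %/ 2)%Z; lia.
  have [q Hq] : exists q, d = 2 * q - c by exists ((c + d) %/ 2)%Z; lia.
  subst b d.
  exists Winv; split; first by apply: cliff_gen; right; left.
  exists (gi p (p - a)), (gi q (q - c)); do 2 (split; first exact: gaussian_gi).
  rewrite /Winv mul_scalar_mx scalerA !scale_vec2 omega_inv; apply: vec2_eq;
  rewrite /gi !(intrD, intrN, intrM) ?expr0 ?expr1; field: sqrt2K iK; nzt.
- have [p Hp] : exists p, c = 2 * p - a by exists ((a + c) %/ 2)%Z; lia.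
  have [q Hq] : exists q, d = 2 * q - b by exists ((b + d) %/ 2)%Z; lia.
  subst c d.
  exists Hgate; split; first by apply: cliff_gen; right; right; left.
  exists (gi p q), (gi (a - p) (b - q)); do 2 (split; first exact: gaussian_gi).
  rewrite -scalemxAr G_H !scale_vec2; apply: vec2_eq;
  rewrite /gi !(intrD, intrN, intrM) ?expr0 ?expr1; field: sqrt2K iK; nzt.
- have [p Hp] : exists p, d = 2 * p - a by exists ((a + d) %/ 2)%Z; lia.
  have [q Hq] : exists q, c = 2 * q - b by exists ((b + c) %/ 2)%Z; lia.
  subst c d.
  exists (Hgate *m Sgate); split.
    by apply: cliff_comp; apply: cliff_gen; [right; right; left|right; right; right; left].
  exists (gi (a - p) q), (gi p (b - q)); do 2 (split; first exact: gaussian_gi).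
  rewrite -mulmxA -scalemxAr G_S -scalemxAr G_H !scale_vec2; apply: vec2_eq;
  rewrite /gi !(intrD, intrN, intrM) ?expr0 ?expr1; field: sqrt2K iK; nzt.
Qed.


Lemma K2 l a b c d : a * a + b * b + c * c + d * d = (4 * 5 ^ l)%N%:Z ->
  exists W, clifford W /\
    grep (W *m ((sqrt2 ^+ 2 * sqrt5 ^+ l)^-1 *: vec2 (gi a b) (gi c d))) 0 l.
Proof.
move=> Hn; have [t Ht] := odd5 l.
have Hn' : a * a + b * b + c * c + d * d = 4 * (2 * t + 1) by lia.
have := s5n l; have := sqrt2_neq0 => ? ?.
case: (N4 Hn') => [[h1 h2 h3 h4]|[h1 h2 h3 h4]].
- exists 1%:M; split; first exact: clifford_id.
  exists (gi (a %/ 2)%Z (b %/ 2)%Z), (gi (c %/ 2)%Z (d %/ 2)%Z).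
  do 2 (split; first exact: gaussian_gi).
  rewrite mul1mx !scale_vec2; apply: vec2_eq; rewrite /gi.
    by rewrite {1}(ev2 h1) {1}(ev2 h2) !intrM ?expr0; field: sqrt2K; nzt.
  by rewrite {1}(ev2 h3) {1}(ev2 h4) !intrM ?expr0; field: sqrt2K; nzt.
- have [p Hp] : exists p, b = 2 * p - a by exists ((a + b) %/ 2)%Z; lia.
  have [q Hq] : exists q, d = 2 * q - c by exists ((c + d) %/ 2)%Z; lia.
  subst b d.
  have Hm : p * p + (p - a) * (p - a) + q * q + (q - c) * (q - c) = (2 * 5 ^ l)%N%:Z.
    have E : 2 * (p * p + (p - a) * (p - a) + q * q + (q - c) * (q - c)) =
      a * a + (2 * p - a) * (2 * p - a) + c * c + (2 * q - c) * (2 * q - c) by ring.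
    move: E; rewrite Hn; lia.
  have [W' [HW' HgW']] := K1 Hm.
  exists (W' *m Winv); split.
    by apply: cliff_comp => //; apply: cliff_gen; right; left.
  rewrite -mulmxA.
  suff -> : Winv *m ((sqrt2 ^+ 2 * sqrt5 ^+ l)^-1 *: vec2 (gi a (2 * p - a)) (gi c (2 * q - c)))
     = (sqrt2 ^+ 1 * sqrt5 ^+ l)^-1 *: vec2 (gi p (p - a)) (gi q (q - c)).
    by [].
  rewrite /Winv mul_scalar_mx scalerA !scale_vec2 omega_inv; apply: vec2_eq;
  rewrite /gi !(intrD, intrN, intrM) ?expr0 ?expr1 ?expr2; field: sqrt2K iK; nzt.
Qed.

Theorem lemma6p8 (u : 'cV[algC]_2) (k l : nat) :
  unit_vec u -> has_rep u k l -> lde u k l ->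
  exists W : 'M[algC]_2, clifford W /\ lde (W *m u) 0 l.
Proof.
move=> Hu [Hk [al [be [Ha [Hb Hv]]]]] Hlde.
have [W [HW HgW]] : exists W, clifford W /\ grep (W *m u) 0 l.
  case: Ha => [a [b Ea]]; case: Hb => [c [d Eb]]; subst al be.
  have Hn := @unit_norm k l a b c d; rewrite -Hv in Hn; have {}Hn := Hn Hu.
  clear Hlde; move: Hk Hn Hv; case: k => [|[|[|k]]] // _ Hn Hv.
  - exists 1%:M; split; first exact: clifford_id.
    by rewrite mul1mx Hv; exists (gi a b), (gi c d); do 2 (split; first exact: gaussian_gi).
  - by rewrite Hv; apply: K1; rewrite Hn.
  - by rewrite Hv; apply: K2; rewrite Hn.
exists W; split => //.
have Hr0 : has_rep (W *m u) 0 l by [].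
split; split.
- by exists l.
- by [].
- by exists 0%N.
- move=> k' l' [_ Hg].
  have [V [HV EV]] := cliff_inv HW.
  have [j Hj] := cliff_grep HV Hg.
  rewrite mulmxA EV mul1mx in Hj.
  have [k'' [Hk'' Hg'']] := reduceA Hu Hj.
  exact: (proj2 (proj2 Hlde) k'' l').
Qed.
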